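(* Let $\lambda>0$, $\gamma>0$, $\beta\ge 0$. Let $X$ be the Banach space of bounded analytic functions $h:[0,\lambda]\to\mathbb{R}$ with the supremum norm, $K=\{h\in X: h\ge 0,\ \|h\|_\infty\le 1\}$, and for $h\in K$ let $\Psi_h=1+\beta h$, $$D_h=\gamma\left(1+\gamma\int_0^\lambda\frac{\exp\left(-2\int_0^x\frac{\xi}{\Psi_h(\xi)}d\xi\right)}{\Psi_h(x)}\,dx\right)^{-1},$$ and $$(\tau h)(\eta)=D_h\left(\frac1\gamma+\int_0^\eta\frac{\exp\left(-2\int_0^x\frac{\xi}{\Psi_h(\xi)}d\xi\right)}{\Psi_h(x)}\,dx\right),\quad 0<\eta<\lambda.$$ Then $\tau(K)\subset K$. *)

(* Defs.v *)
From Stdlib Require Import Reals.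
From Coquelicot Require Import Coquelicot.
Open Scope R_scope.

Definition analytic_on (a b : R) (f : R -> R) : Prop :=
  forall x0, a <= x0 <= b ->
    exists (c : nat -> R) (r : R), 0 < r /\
      forall x, a <= x <= b -> Rabs (x - x0) < r -> is_pseries c (x - x0) (f x).

(* Membership in X: bounded analytic functions on [0, lambda]
   (a function R -> R whose values off [0,lambda] are irrelevant). *)
Definition in_X (lambda : R) (h : R -> R) : Prop :=
  analytic_on 0 lambda h /\
  exists M, forall x, 0 <= x <= lambda -> Rabs (h x) <= M.

Definition in_K (lambda : R) (h : R -> R) : Prop :=
  in_X lambda h /\ forall x, 0 <= x <= lambda -> 0 <= h x <= 1.

Definition Psi (beta : R) (h : R -> R) (x : R) : R := 1 + beta * h x.

Definition integrand (beta : R) (h : R -> R) (x : R) : R :=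
  exp (-2 * RInt (fun xi => xi / Psi beta h xi) 0 x) / Psi beta h x.

Definition D_h (lambda gamma beta : R) (h : R -> R) : R :=
  gamma / (1 + gamma * RInt (integrand beta h) 0 lambda).

Definition tau (lambda gamma beta : R) (h : R -> R) (eta : R) : R :=
  D_h lambda gamma beta h * (1 / gamma + RInt (integrand beta h) 0 eta).

(* Main.v *)
Require Import Defs.
From Stdlib Require Import Reals Lra Lia Classical.
From Coquelicot Require Import Coquelicot.
Open Scope R_scope.

Definition cst (k : R) (n : nat) : R := match n with O => k | S _ => 0 end.

Lemma is_pseries_cst k y : is_pseries (cst k) y k.
Proof.
  apply is_pseries_R. unfold is_series.
  apply filterlim_ext with (fun _ => k).
  - intro m. induction m as [|m IH].
    + rewrite sum_O. simpl. ring.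
    + rewrite sum_Sn. rewrite <- IH. simpl. unfold plus; simpl. ring.
  - apply filterlim_const.
Qed.

Lemma PSeries_cst k y : PSeries (cst k) y = k.
Proof. apply is_pseries_unique, is_pseries_cst. Qed.

Lemma Gb_mono (c : nat -> R) r x M : 0 <= r <= x ->
  (forall n, Rabs (c n * x ^ n) <= M) -> forall n, Rabs (c n * r ^ n) <= M.
Proof.
  intros Hr H n. eapply Rle_trans; [|apply (H n)].
  rewrite !Rabs_mult. apply Rmult_le_compat_l; [apply Rabs_pos|].
  rewrite !Rabs_pos_eq; try (apply pow_le; lra). apply pow_incr; lra.
Qed.

Lemma Gb_of_lt (c : nat -> R) r : 0 <= r -> Rbar_lt r (CV_radius c) ->
  exists M, forall n, Rabs (c n * r ^ n) <= M.
Proof.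
  intros Hr Hlt. destruct (CV_radius_bounded c) as [Hub Hlub].
  apply NNPP; intro Hno.
  assert (Hu : is_ub_Rbar (fun r0 : R => exists M : R, forall n : nat, Rabs (c n * r0 ^ n) <= M) r).
  { intros x [M HM]. simpl. destruct (Rle_dec x r) as [h|h]; [exact h|].
    exfalso; apply Hno. exists M. apply Gb_mono with x; [lra|exact HM]. }
  apply Hlub in Hu. apply (Rbar_le_not_lt _ _ Hu Hlt).
Qed.

Lemma le_of_Gb (c : nat -> R) r : (exists M, forall n, Rabs (c n * r ^ n) <= M) ->
  Rbar_le r (CV_radius c).
Proof. intro H. destruct (CV_radius_bounded c) as [Hub _]. apply Hub, H. Qed.

Lemma in_CV (c : nat -> R) r y : Rabs y < r -> Rbar_le r (CV_radius c) ->
  Rbar_lt (Rabs y) (CV_radius c).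
Proof. intros H1 H2. eapply Rbar_lt_le_trans; [|exact H2]. exact H1. Qed.

Lemma CV_cst k : Rbar_le 1 (CV_radius (cst k)).
Proof. apply le_of_Gb. exists (Rabs k). intros [|n]; simpl.
  rewrite Rmult_1_r; lra. rewrite Rmult_0_l, Rabs_R0; apply Rabs_pos. Qed.

Fixpoint raux (b0 : R) (step : nat -> (nat -> R) -> R) (n : nat) : nat -> R :=
  match n with
  | O => fun _ => b0
  | S m => fun k => if Nat.leb k m then raux b0 step m k else step m (raux b0 step m)
  end.
Definition rseq b0 step n := raux b0 step n n.

Lemma raux_rseq b0 step n k : (k <= n)%nat -> raux b0 step n k = rseq b0 step k.
Proof.
  induction n as [|m IH]; intro Hk.
  - assert (k = O) by lia. subst. reflexivity.
  - simpl. destruct (Nat.leb k m) eqn:E.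
    + apply Nat.leb_le in E. apply IH, E.
    + apply Nat.leb_gt in E. assert (k = S m) by lia. subst.
      unfold rseq. cbn [raux]. assert (Hf : Nat.leb (S m) m = false) by (apply Nat.leb_gt; lia).
      rewrite Hf. reflexivity.
Qed.

Lemma rseq_0 b0 step : rseq b0 step 0 = b0.
Proof. reflexivity. Qed.

Lemma rseq_S b0 step :
  (forall m p q, (forall k, (k <= m)%nat -> p k = q k) -> step m p = step m q) ->
  forall m, rseq b0 step (S m) = step m (rseq b0 step).
Proof.
  intros Hs m. unfold rseq at 1. cbn [raux]. assert (Hf : Nat.leb (S m) m = false) by (apply Nat.leb_gt; lia).
  rewrite Hf.
  apply Hs. intros k Hk. apply raux_rseq, Hk.
Qed.

Lemma geom_half n : sum_f_R0 (fun k => (/2) ^ k) n <= 2.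
Proof.
  assert (H : forall n, sum_f_R0 (fun k => (/2) ^ k) n = 2 - (/2)^n).
  { induction n0 as [|n0 IH]; simpl. lra. rewrite IH. lra. }
  rewrite H. assert (0 < (/2)^n) by (apply pow_lt; lra). lra.
Qed.

Lemma majorant (w b : nat -> R) (rho W al : R) : 0 < rho -> 0 <= al ->
  (forall k, Rabs (w k) * rho ^ k <= W) ->
  (forall n, Rabs (b (S n)) <= al * sum_f_R0 (fun k => Rabs (w k) * Rabs (b (n - k)%nat)) n) ->
  exists s, 0 < s /\ s <= rho /\ forall n, Rabs (b n) * s ^ n <= Rabs (b O).
Proof.
  intros Hrho Hal HW Hb.
  assert (W0 : 0 <= W). { specialize (HW O). simpl in HW. pose proof (Rabs_pos (w O)). lra. }
  set (s := Rmin (rho / 2) (/ (2 * al * W + 1))).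
  assert (Hpos : 0 < 2 * al * W + 1) by nra.
  assert (Hs1 : 0 < s). { unfold s. apply Rmin_glb_lt. lra. apply Rinv_0_lt_compat; lra. }
  assert (Hs2 : s <= rho / 2) by apply Rmin_l.
  assert (Hs3 : s <= / (2 * al * W + 1)) by apply Rmin_r.
  assert (Hs4 : 2 * al * W * s <= 1).
  { apply Rle_trans with ((2 * al * W) * / (2 * al * W + 1)).
    apply Rmult_le_compat_l; nra.
    apply Rmult_le_reg_r with (2 * al * W + 1); [lra|].
    rewrite Rmult_assoc, Rinv_l; lra. }
  exists s. split; [exact Hs1|split; [lra|]].
  set (B := Rabs (b O)).
  assert (Hw : forall k, Rabs (w k) * s ^ k <= W * (/2) ^ k).
  { intro k. replace (s ^ k) with (rho ^ k * (s / rho) ^ k).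
    2:{ rewrite <- Rpow_mult_distr. f_equal. field. lra. }
    assert (Hsr : 0 <= s / rho) by (apply Rmult_le_pos; [lra|]; left; apply Rinv_0_lt_compat; lra).
    rewrite <- Rmult_assoc. apply Rmult_le_compat.
    apply Rmult_le_pos; [apply Rabs_pos|apply pow_le; lra].
    apply pow_le; lra.
    apply HW.
    apply pow_incr. split. apply Rmult_le_pos; [lra|]. left; apply Rinv_0_lt_compat; lra.
    apply Rmult_le_reg_r with rho; [lra|]. unfold Rdiv. rewrite Rmult_assoc, Rinv_l; lra. }
  assert (Hall : forall n j, (j <= n)%nat -> Rabs (b j) * s ^ j <= B).
  { induction n as [|n IH]; intros j Hj.
    - assert (j = O) by lia. subst. simpl. unfold B. lra.
    - destruct (Nat.le_gt_cases j n) as [Hjn|Hjn]. apply IH, Hjn.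
      assert (j = S n) by lia. subst j.
      apply Rle_trans with (al * s * sum_f_R0 (fun k => (W * (/2) ^ k) * B) n).
      + apply Rle_trans with (al * sum_f_R0 (fun k => Rabs (w k) * Rabs (b (n - k)%nat)) n * s ^ S n).
        { apply Rmult_le_compat_r. apply pow_le; lra. apply Hb. }
        rewrite Rmult_assoc. replace (al * s * sum_f_R0 (fun k : nat => W * (/ 2) ^ k * B) n)
          with (al * (s * sum_f_R0 (fun k : nat => W * (/ 2) ^ k * B) n)) by ring.
        apply Rmult_le_compat_l; [lra|]. rewrite (Rmult_comm (sum_f_R0 _ n)), scal_sum, scal_sum.
        apply sum_Rle. intros k Hk.
        replace (Rabs (w k) * Rabs (b (n - k)%nat) * s ^ S n)
          with ((Rabs (w k) * s ^ k) * (Rabs (b (n - k)%nat) * s ^ (n - k)) * s).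
        2:{ replace (S n) with (S (k + (n - k))) by lia. simpl. rewrite pow_add. ring. }
        apply Rmult_le_compat_r; [lra|]. apply Rmult_le_compat.
        apply Rmult_le_pos; [apply Rabs_pos|apply pow_le; lra].
        apply Rmult_le_pos; [apply Rabs_pos|apply pow_le; lra].
        apply Hw. apply IH. lia.
      + assert (HB : 0 <= B) by apply Rabs_pos.
        replace (sum_f_R0 (fun k : nat => W * (/ 2) ^ k * B) n)
          with ((W * B) * sum_f_R0 (fun k => (/2) ^ k) n).
        2:{ rewrite scal_sum. apply sum_eq. intros; ring. }
        pose proof (geom_half n).
        assert (0 <= sum_f_R0 (fun k => (/2) ^ k) n).
        { apply cond_pos_sum. intro; apply pow_le; lra. }
        apply Rle_trans with (al * s * (W * B) * 2).
        rewrite <- Rmult_assoc. apply Rmult_le_compat_l; [|lra].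
        repeat apply Rmult_le_pos; lra.
        replace (al * s * (W * B) * 2) with ((2 * al * W * s) * B) by ring.
        nra. }
  intro n. apply (Hall n n). lia.
Qed.

Lemma Rbar_le_min (r : R) A B : Rbar_le r A -> Rbar_le r B -> Rbar_le r (Rbar_min A B).
Proof. destruct A, B; simpl; auto; intros; try apply Rmin_glb; auto. Qed.

Lemma INR_le_pow n : INR (S n) <= 2 ^ n.
Proof. induction n as [|n IH]. simpl; lra. rewrite S_INR. replace (2 ^ S n) with (2 * 2 ^ n) by (simpl; ring).
  assert (1 <= 2 ^ n) by (apply pow_R1_Rle; lra). lra. Qed.

Lemma Gb_mult (a b : nat -> R) rho M1 M2 : 0 <= rho ->
  (forall n, Rabs (a n * rho ^ n) <= M1) -> (forall n, Rabs (b n * rho ^ n) <= M2) ->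
  forall n, Rabs (PS_mult a b n * (rho / 2) ^ n) <= M1 * M2.
Proof.
  intros Hr H1 H2 n. unfold PS_mult.
  assert (M1p : 0 <= M1) by (eapply Rle_trans; [apply Rabs_pos|apply (H1 O)]).
  assert (M2p : 0 <= M2) by (eapply Rle_trans; [apply Rabs_pos|apply (H2 O)]).
  replace ((rho / 2) ^ n) with (rho ^ n * (/2) ^ n) by (unfold Rdiv; rewrite Rpow_mult_distr; ring).
  rewrite <- Rmult_assoc, Rabs_mult, (Rabs_pos_eq ((/2)^n)) by (apply pow_le; lra).
  rewrite (Rmult_comm (sum_f_R0 _ n)), scal_sum.
  eapply Rle_trans. apply Rmult_le_compat_r. apply pow_le; lra. apply sum_f_R0_triangle.
  eapply Rle_trans. apply Rmult_le_compat_r. apply pow_le; lra.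
  apply sum_Rle with (Bn := fun _ => M1 * M2).
  { intros k Hk. replace (rho ^ n) with (rho ^ k * rho ^ (n - k)).
    2:{ rewrite <- pow_add. f_equal. lia. }
    replace (a k * b (n - k)%nat * (rho ^ k * rho ^ (n - k))) with
      ((a k * rho ^ k) * (b (n - k)%nat * rho ^ (n - k))) by ring.
    rewrite Rabs_mult. apply Rmult_le_compat; try apply Rabs_pos; auto. }
  rewrite sum_cte. pose proof (INR_le_pow n).
  assert (0 < 2 ^ n) by (apply pow_lt; lra).
  rewrite <- Rinv_pow by lra.
  replace (M1 * M2 * INR (S n) * / 2 ^ n) with ((M1 * M2) * (INR (S n) / 2 ^ n)) by (unfold Rdiv; ring).
  rewrite <- (Rmult_1_r (M1 * M2)) at 2. apply Rmult_le_compat_l. nra.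
  apply Rmult_le_reg_r with (2 ^ n); auto. unfold Rdiv. rewrite Rmult_assoc, Rinv_l; lra.
Qed.

Definition LA (lam : R) (f : R -> R) : Prop :=
  forall x0, 0 <= x0 <= lam -> exists (c : nat -> R) (r : R), 0 < r /\ Rbar_le r (CV_radius c) /\
    forall x, 0 <= x <= lam -> Rabs (x - x0) < r -> f x = PSeries c (x - x0).

Lemma LA_ext lam f g : (forall x, 0 <= x <= lam -> f x = g x) -> LA lam f -> LA lam g.
Proof.
  intros E H x0 Hx0. destruct (H x0 Hx0) as (c & r & Hr & Hc & Hf).
  exists c, r. split; [|split]; auto. intros x Hx Hxr. rewrite <- E; auto.
Qed.

Lemma LA_const lam k : LA lam (fun _ => k).
Proof.
  intros x0 _. exists (cst k), 1. split; [lra|split]. apply CV_cst.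
  intros; rewrite PSeries_cst; reflexivity.
Qed.

Lemma LA_plus lam f g : LA lam f -> LA lam g -> LA lam (fun x => f x + g x).
Proof.
  intros Hf Hg x0 Hx0. destruct (Hf x0 Hx0) as (a & r1 & Hr1 & Ha & Ef).
  destruct (Hg x0 Hx0) as (b & r2 & Hr2 & Hb & Eg).
  exists (PS_plus a b), (Rmin r1 r2). split; [apply Rmin_glb_lt; auto|split].
  - eapply Rbar_le_trans; [|apply CV_radius_plus]. apply Rbar_le_min.
    eapply Rbar_le_trans; [|exact Ha]. simpl; apply Rmin_l.
    eapply Rbar_le_trans; [|exact Hb]. simpl; apply Rmin_r.
  - intros x Hx Hxr. pose proof (Rmin_l r1 r2). pose proof (Rmin_r r1 r2).
    rewrite Ef, Eg by (auto; lra). rewrite PSeries_plus; auto.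
    apply CV_radius_inside, in_CV with r1; auto; lra.
    apply CV_radius_inside, in_CV with r2; auto; lra.
Qed.

Lemma LA_mult lam f g : LA lam f -> LA lam g -> LA lam (fun x => f x * g x).
Proof.
  intros Hf Hg x0 Hx0. destruct (Hf x0 Hx0) as (a & r1 & Hr1 & Ha & Ef).
  destruct (Hg x0 Hx0) as (b & r2 & Hr2 & Hb & Eg).
  set (r0 := Rmin r1 r2). pose proof (Rmin_l r1 r2). pose proof (Rmin_r r1 r2).
  assert (Hr0 : 0 < r0) by (apply Rmin_glb_lt; auto).
  destruct (Gb_of_lt a (r0/2)) as [M1 HM1]. lra.
  { eapply Rbar_lt_le_trans; [|exact Ha]. simpl. unfold r0 in *. lra. }
  destruct (Gb_of_lt b (r0/2)) as [M2 HM2]. lra.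
  { eapply Rbar_lt_le_trans; [|exact Hb]. simpl. unfold r0 in *. lra. }
  exists (PS_mult a b), (r0 / 2 / 2). split; [lra|split].
  - apply le_of_Gb. exists (M1 * M2). apply Gb_mult; auto. lra.
  - intros x Hx Hxr. unfold r0 in *.
    rewrite Ef, Eg by (auto; lra). rewrite PSeries_mult; auto.
    apply in_CV with r1; auto; lra.
    apply in_CV with r2; auto; lra.
Qed.

Definition lin (a b : R) (n : nat) : R := match n with O => a | 1%nat => b | _ => 0 end.

Lemma LA_id lam : LA lam (fun x => x).
Proof.
  intros x0 _. exists (lin x0 1), 1. split; [lra|split].
  - apply le_of_Gb. exists (Rabs x0 + 1). intros [|[|n]]; simpl.
    + pose proof (Rabs_pos x0). rewrite Rmult_1_r. lra.
    + rewrite !Rmult_1_r, Rabs_R1. pose proof (Rabs_pos x0). lra.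
    + rewrite Rmult_0_l, Rabs_R0. pose proof (Rabs_pos x0). lra.
  - intros x _ _.
    rewrite (PSeries_ext _ (PS_plus (cst x0) (PS_incr_1 (cst 1)))).
    2:{ intros [|[|n]]; unfold lin, PS_plus, PS_incr_1, cst, plus, zero; simpl; ring. }
    rewrite PSeries_plus, PSeries_incr_1, !PSeries_cst. ring.
    exists x0; apply is_pseries_cst.
    eexists; apply is_pseries_incr_1, is_pseries_cst.
Qed.

Lemma cont_pt_eps g x : continuity_pt g x -> forall eps, 0 < eps ->
  exists del, 0 < del /\ forall y, Rabs (y - x) < del -> Rabs (g y - g x) < eps.
Proof.
  intros H eps Heps. destruct (H eps Heps) as [del [Hd Hy]]. exists del. split; auto.
  intros y Hy'. destruct (Req_dec y x) as [->|Hne].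
  - unfold Rminus; rewrite Rplus_opp_r, Rabs_R0; lra.
  - apply (Hy y). split. split; [exact I| auto]. exact Hy'.
Qed.

Lemma eps_cont g x : (forall eps, 0 < eps ->
  exists del, 0 < del /\ forall y, Rabs (y - x) < del -> Rabs (g y - g x) < eps) ->
  continuous g x.
Proof.
  intro H. apply continuity_pt_filterlim. intros eps Heps.
  destruct (H eps Heps) as [del [Hd Hy]]. exists del. split; auto.
  intros y [_ Hy']. apply Hy, Hy'.
Qed.

Definition clamp (lam x : R) := Rmax 0 (Rmin lam x).

Lemma clamp_in lam x : 0 <= lam -> 0 <= clamp lam x <= lam.
Proof. intros; unfold clamp, Rmax, Rmin; repeat destruct Rle_dec; lra. Qed.

Lemma clamp_id lam x : 0 <= x <= lam -> clamp lam x = x.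
Proof. intros; unfold clamp, Rmax, Rmin; repeat destruct Rle_dec; lra. Qed.

Lemma clamp_lip lam x y : 0 <= lam -> Rabs (clamp lam y - clamp lam x) <= Rabs (y - x).
Proof. intros; unfold clamp, Rmax, Rmin, Rabs; repeat destruct Rle_dec; repeat destruct Rcase_abs; lra. Qed.

Lemma LA_relcont lam (f : R -> R) : LA lam f -> forall x0, 0 <= x0 <= lam -> forall eps, 0 < eps ->
  exists del, 0 < del /\ forall y, 0 <= y <= lam -> Rabs (y - x0) < del -> Rabs (f y - f x0) < eps.
Proof.
  intros H x0 Hx0 eps Heps. destruct (H x0 Hx0) as (c & r & Hr & Hc & Ef).
  assert (Hc0 : continuity_pt (PSeries c) 0).
  { apply PSeries_continuity. apply in_CV with r; auto. rewrite Rabs_R0; auto. }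
  destruct (cont_pt_eps _ _ Hc0 eps Heps) as [del [Hd Hy]].
  exists (Rmin del r). split. apply Rmin_glb_lt; auto.
  intros y Hy1 Hy2. pose proof (Rmin_l del r). pose proof (Rmin_r del r).
  rewrite (Ef y), (Ef x0); auto; try lra.
  unfold Rminus at 3. rewrite Rplus_opp_r. apply Hy. rewrite Rminus_0_r. lra.
  unfold Rminus; rewrite Rplus_opp_r, Rabs_R0; auto.
Qed.

Lemma LA_cont_ext lam f : 0 <= lam -> LA lam f -> forall x, continuous (fun y => f (clamp lam y)) x.
Proof.
  intros Hl H x. apply eps_cont. intros eps Heps.
  destruct (LA_relcont lam f H (clamp lam x) (clamp_in lam x Hl) eps Heps) as [del [Hd Hy]].
  exists del. split; auto. intros y Hxy. apply Hy. apply clamp_in; auto.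
  eapply Rle_lt_trans; [apply clamp_lip; auto|exact Hxy].
Qed.

Lemma RInt_clamp lam (f : R -> R) x : 0 <= x <= lam -> RInt f 0 x = RInt (fun y => f (clamp lam y)) 0 x.
Proof.
  intro Hx. apply RInt_ext. intros t Ht. rewrite Rmin_left, Rmax_right in Ht by lra.
  rewrite clamp_id; auto; lra.
Qed.

Lemma LA_RInt lam f : 0 <= lam -> LA lam f -> LA lam (fun x => RInt f 0 x).
Proof.
  intros Hl H x0 Hx0. destruct (H x0 Hx0) as (c & r & Hr & Hc & Ef).
  set (g := fun y => f (clamp lam y)).
  assert (Hg : forall a b, ex_RInt g a b).
  { intros a b. apply (@ex_RInt_continuous R_CompleteNormedModule). intros z _. apply LA_cont_ext; auto. }
  exists (PS_plus (cst (RInt g 0 x0)) (PS_Int c)), (Rmin r 1).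
  pose proof (Rmin_l r 1). pose proof (Rmin_r r 1).
  split; [apply Rmin_glb_lt; lra|split].
  - eapply Rbar_le_trans; [|apply CV_radius_plus]. apply Rbar_le_min.
    eapply Rbar_le_trans; [|apply CV_cst]. simpl; lra.
    rewrite CV_radius_Int. eapply Rbar_le_trans; [|exact Hc]. simpl; lra.
  - intros x Hx Hxr. rewrite RInt_clamp with (lam := lam) by auto. fold g.
    rewrite <- (RInt_Chasles g 0 x0 x) by auto.
    rewrite PSeries_plus, PSeries_cst.
    2:{ eexists; apply is_pseries_cst. }
    2:{ apply CV_radius_inside. rewrite CV_radius_Int. apply in_CV with r; auto; lra. }
    unfold plus; simpl. f_equal.
    rewrite (RInt_ext g (fun t => scal 1 (PSeries c (1 * t + - x0)))).
    2:{ intros t Ht. unfold g. unfold scal; simpl; unfold mult; simpl. rewrite Rmult_1_l. rewrite clamp_id.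
        2:{ unfold Rmin, Rmax in Ht; destruct Rle_dec in Ht; lra. }
        rewrite Ef. f_equal; ring.
        unfold Rmin, Rmax in Ht; destruct Rle_dec in Ht; lra.
        unfold Rmin, Rmax in Ht; destruct Rle_dec in Ht; unfold Rabs in *; destruct Rcase_abs; destruct Rcase_abs; lra. }
    transitivity (RInt (PSeries c) (1 * x0 + - x0) (1 * x + - x0)).
    { apply (RInt_comp_lin (V := R_CompleteNormedModule) (PSeries c) 1 (-x0) x0 x).
      replace (1 * x0 + - x0) with 0 by ring. apply ex_RInt_PSeries.
      apply in_CV with r; auto. replace (1 * x + - x0) with (x - x0) by ring. lra. }
    replace (1 * x0 + - x0) with 0 by ring. replace (1 * x + - x0) with (x - x0) by ring.
    apply RInt_PSeries. apply in_CV with r; auto; lra.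
Qed.

Lemma LA_inv lam f : LA lam f -> (forall x, 0 <= x <= lam -> f x <> 0) -> LA lam (fun x => / f x).
Proof.
  intros H Hnz x0 Hx0. destruct (H x0 Hx0) as (c & r & Hr & Hc & Ef).
  assert (Hc0 : c O <> 0).
  { rewrite <- PSeries_0. assert (E1 := Ef x0 Hx0). unfold Rminus in E1; rewrite Rplus_opp_r, Rabs_R0 in E1.
    rewrite <- (E1 Hr). apply Hnz; auto. }
  set (c0 := c O) in *.
  destruct (Gb_of_lt c (r/2)) as [M HM]. lra.
  { eapply Rbar_lt_le_trans; [|exact Hc]. simpl. lra. }
  set (step := fun m (p : nat -> R) => - / c0 * sum_f_R0 (fun k => c (S k) * p (m - k)%nat) m).
  set (d := rseq (/ c0) step).
  assert (HS : forall m, d (S m) = step m d).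
  { apply rseq_S. intros m p q Hpq. unfold step. f_equal. apply sum_eq.
    intros i Hi. rewrite Hpq; auto. lia. }
  assert (H0 : d O = / c0) by reflexivity.
  destruct (majorant (fun k => c (S k)) d (r/2) (M / (r/2)) (Rabs (/ c0))) as (s & Hs & Hsr & Hd).
  - lra.
  - apply Rabs_pos.
  - intro k. specialize (HM (S k)). rewrite Rabs_mult, (Rabs_pos_eq ((r/2)^(S k))) in HM by (apply pow_le; lra).
    apply Rmult_le_reg_r with (r/2); [lra|]. replace (M / (r/2) * (r/2)) with M by (field; lra).
    replace (Rabs (c (S k)) * (r/2)^k * (r/2)) with (Rabs (c (S k)) * (r/2)^(S k)) by (simpl; ring). exact HM.
  - intro n. rewrite HS. unfold step. rewrite Rabs_mult, Rabs_Ropp.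
    apply Rmult_le_compat_l; [apply Rabs_pos|].
    eapply Rle_trans; [apply sum_f_R0_triangle|]. right. apply sum_eq. intros; apply Rabs_mult.
  - assert (Hdcv : Rbar_le s (CV_radius d)).
    { apply le_of_Gb. exists (Rabs (d O)). intro n. rewrite Rabs_mult, (Rabs_pos_eq (s ^ n)) by (apply pow_le; lra). apply Hd. }
    exists d, s. split; auto. split; auto.
    + intros x Hx Hxs.
      assert (Hprod : f x * PSeries d (x - x0) = 1).
      { rewrite Ef; auto; try lra. rewrite <- PSeries_mult.
        - rewrite (PSeries_ext _ (cst 1)). apply PSeries_cst.
          intros [|m].
          + unfold PS_mult. simpl. rewrite H0. unfold c0. field. exact Hc0.
          + unfold PS_mult. rewrite decomp_sum by lia. simpl pred. rewrite Nat.sub_0_r.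
            rewrite HS. unfold step. fold c0. simpl cst.
            replace (sum_f_R0 (fun i : nat => c (S i) * d (S m - S i)%nat) m)
              with (sum_f_R0 (fun k : nat => c (S k) * d (m - k)%nat) m) by reflexivity.
            field. exact Hc0.
        - apply in_CV with r; auto; lra.
        - apply in_CV with s; auto. }
      assert (f x <> 0) by auto.
      apply Rmult_eq_reg_l with (f x); auto. rewrite Hprod. field; auto.
Qed.

Lemma between_abs y z : Rmin 0 y <= z <= Rmax 0 y -> Rabs z <= Rabs y.
Proof. intros Hz; unfold Rmin, Rmax in Hz; destruct Rle_dec in Hz; unfold Rabs; destruct Rcase_abs; destruct Rcase_abs; lra. Qed.

Lemma is_derive_val (f : R -> R) x l l' : is_derive f x l -> l = l' -> is_derive f x l'.
Proof. intros H <-; exact H. Qed.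

Lemma exp_series (c : nat -> R) r : 0 < r -> Rbar_le r (CV_radius c) ->
  exists e s, 0 < s /\ s <= r / 2 /\ Rbar_le s (CV_radius e) /\
    forall y, Rabs y < s -> PSeries e y = exp (PSeries c y).
Proof.
  intros Hr Hc.
  set (c' := PS_derive c).
  assert (Hc' : Rbar_le r (CV_radius c')) by (unfold c'; rewrite CV_radius_derive; auto).
  destruct (Gb_of_lt c' (r/2)) as [M HM]. lra.
  { eapply Rbar_lt_le_trans; [|exact Hc']. simpl. lra. }
  set (step := fun m (p : nat -> R) => / INR (S m) * sum_f_R0 (fun k => c' k * p (m - k)%nat) m).
  set (e := rseq (exp (c O)) step).
  assert (HS : forall m, e (S m) = step m e).
  { apply rseq_S. intros m p q Hpq. unfold step. f_equal. apply sum_eq.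
    intros i Hi. rewrite Hpq; auto. lia. }
  assert (H0 : e O = exp (c O)) by reflexivity.
  assert (Hinv : forall n, 0 < / INR (S n) <= 1).
  { intro n. assert (1 <= INR (S n)) by (rewrite S_INR; pose proof (pos_INR n); lra).
    split. apply Rinv_0_lt_compat; lra.
    apply Rmult_le_reg_l with (INR (S n)); [lra|]. rewrite Rinv_r; lra. }
  destruct (majorant c' e (r/2) M 1) as (s & Hs & Hsr & Hd).
  - lra.
  - lra.
  - intro k. specialize (HM k). rewrite Rabs_mult, (Rabs_pos_eq ((r/2)^k)) in HM by (apply pow_le; lra). exact HM.
  - intro n. rewrite HS. unfold step. rewrite Rabs_mult, Rabs_pos_eq by (left; apply Hinv).
    apply Rmult_le_compat. left; apply Hinv. apply Rabs_pos. apply Hinv.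
    eapply Rle_trans; [apply sum_f_R0_triangle|]. right. apply sum_eq. intros; apply Rabs_mult.
  - assert (Hecv : Rbar_le s (CV_radius e)).
    { apply le_of_Gb. exists (Rabs (e O)). intro n. rewrite Rabs_mult, (Rabs_pos_eq (s ^ n)) by (apply pow_le; lra). apply Hd. }
    exists e, s. split; auto. split; auto. split; auto.
    assert (Hder : forall n, PS_derive e n = PS_mult c' e n).
    { intro n. unfold PS_derive. rewrite HS. unfold step. unfold PS_mult.
      pose proof (Hinv n). field. apply not_0_INR. lia. }
    set (H := fun t => PSeries e t * exp (- PSeries c t)).
    assert (HD : forall z, Rabs z < s -> is_derive H z 0).
    { intros z Hz.
      assert (Zc : Rbar_lt (Rabs z) (CV_radius c)) by (apply in_CV with r; auto; lra).
      assert (Zc' : Rbar_lt (Rabs z) (CV_radius c')) by (apply in_CV with r; auto; lra).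
      assert (Ze : Rbar_lt (Rabs z) (CV_radius e)) by (apply in_CV with s; auto).
      pose proof (is_derive_PSeries e z Ze) as D1.
      pose proof (is_derive_PSeries c z Zc) as D2.
      pose proof (is_derive_comp exp (fun t => - PSeries c t) z _ _ (is_derive_exp _) (is_derive_opp _ _ _ D2)) as D3.
      pose proof (is_derive_mult _ _ z _ _ D1 D3 ltac:(intros; apply Rmult_comm)) as D4.
      apply (is_derive_val _ _ _ _ D4).
      rewrite (PSeries_ext _ _ _ Hder), PSeries_mult by auto.
      unfold plus, mult, scal, opp; simpl. unfold mult, plus, opp; simpl. fold c'. ring. }
    intros y Hy.
    assert (HC : forall z, Rabs z < s -> continuity_pt H z).
    { intros z Hz. apply continuity_pt_filterlim. apply (ex_derive_continuous H z).
      eexists; apply HD; auto. }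
    destruct (MVT_gen H 0 y (fun _ => 0)) as (z & _ & Hz).
    + intros z Hz. apply HD. assert (Rabs z <= Rabs y) by (apply between_abs; lra). lra.
    + intros z Hz. apply HC. assert (Rabs z <= Rabs y) by (apply between_abs; lra). lra.
    + assert (HH : H y = 1).
      { replace (H y) with (H 0) by lra. unfold H. rewrite !PSeries_0, H0, exp_Ropp. field.
        apply Rgt_not_eq, exp_pos. }
      unfold H in HH. rewrite exp_Ropp in HH.
      assert (0 < exp (PSeries c y)) by apply exp_pos.
      apply Rmult_eq_reg_r with (/ exp (PSeries c y)). rewrite HH. field. lra.
      apply Rinv_neq_0_compat; lra.
Qed.

Lemma LA_exp lam f : LA lam f -> LA lam (fun x => exp (f x)).
Proof.
  intros H x0 Hx0. destruct (H x0 Hx0) as (c & r & Hr & Hc & Ef).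
  destruct (exp_series c r Hr Hc) as (e & s & Hs & Hsr & He & Ee).
  exists e, s. split; auto. split; auto. intros x Hx Hxs.
  rewrite Ef by (auto; lra). rewrite Ee; auto.
Qed.

Lemma LA_of_analytic lam h : 0 < lam -> analytic_on 0 lam h -> LA lam h.
Proof.
  intros Hl H x0 Hx0. destruct (H x0 Hx0) as (c & r & Hr & Hc).
  set (y0 := Rmin r lam / 2).
  assert (Hy0 : 0 < y0) by (unfold y0; pose proof (Rmin_glb_lt r lam 0 Hr Hl); lra).
  pose proof (Rmin_l r lam). pose proof (Rmin_r r lam).
  assert (Hcv : Rbar_le y0 (CV_radius c)).
  { destruct (Rle_dec x0 (lam/2)) as [Hle|Hgt].
    - assert (Hp := Hc (x0 + y0) ltac:(unfold y0 in *; lra) ltac:(replace (x0 + y0 - x0) with y0 by ring; rewrite Rabs_pos_eq; unfold y0 in *; lra)).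
      replace (x0 + y0 - x0) with y0 in Hp by ring.
      apply Rbar_not_lt_le. intro Hlt. apply (CV_disk_outside c y0).
      rewrite Rabs_pos_eq; [exact Hlt|lra].
      apply ex_series_lim_0. apply is_pseries_R in Hp. eexists; exact Hp.
    - assert (Hp := Hc (x0 - y0) ltac:(unfold y0 in *; lra) ltac:(replace (x0 - y0 - x0) with (- y0) by ring; rewrite Rabs_Ropp, Rabs_pos_eq; unfold y0 in *; lra)).
      replace (x0 - y0 - x0) with (- y0) in Hp by ring.
      apply Rbar_not_lt_le. intro Hlt. apply (CV_disk_outside c (- y0)).
      rewrite Rabs_Ropp, Rabs_pos_eq; [exact Hlt|lra].
      apply ex_series_lim_0. apply is_pseries_R in Hp. eexists; exact Hp. }
  exists c, y0. split; auto. split; auto.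
  intros x Hx Hxr. symmetry. apply is_pseries_unique. apply Hc; auto. unfold y0 in *; lra.
Qed.

Lemma analytic_of_LA lam f : LA lam f -> analytic_on 0 lam f.
Proof.
  intros H x0 Hx0. destruct (H x0 Hx0) as (c & r & Hr & Hc & Ef).
  exists c, r. split; auto. intros x Hx Hxr. rewrite Ef; auto.
  apply PSeries_correct, CV_radius_inside, in_CV with r; auto.
Qed.

Theorem theorem3p3 (lambda gamma beta : R)
  (Hlambda : 0 < lambda) (Hgamma : 0 < gamma) (Hbeta : 0 <= beta)
  (h : R -> R) (Hh : in_K lambda h) :
  in_K lambda (tau lambda gamma beta h).
Proof.
  destruct Hh as [[Han _] Hrange].
  assert (Hl0 : 0 <= lambda) by lra.
  assert (HLh : LA lambda h) by (apply LA_of_analytic; auto).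
  assert (Hpsi1 : forall x, 0 <= x <= lambda -> 1 <= Psi beta h x).
  { intros x Hx. unfold Psi. specialize (Hrange x Hx).
    assert (0 <= beta * h x) by (apply Rmult_le_pos; lra). lra. }
  assert (Hpsinz : forall x, 0 <= x <= lambda -> Psi beta h x <> 0).
  { intros x Hx. specialize (Hpsi1 x Hx). lra. }
  assert (HPsi : LA lambda (Psi beta h)).
  { exact (LA_plus _ _ _ (LA_const lambda 1) (LA_mult _ _ _ (LA_const lambda beta) HLh)). }
  assert (HPi : LA lambda (fun x => / Psi beta h x)) by (apply LA_inv; auto).
  assert (Hq : LA lambda (fun xi => xi / Psi beta h xi)).
  { exact (LA_mult _ _ _ (LA_id lambda) HPi). }
  assert (HF := LA_RInt _ _ Hl0 Hq).
  assert (HE := LA_exp _ _ (LA_mult _ _ _ (LA_const lambda (-2)) HF)).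
  assert (HI : LA lambda (integrand beta h)).
  { exact (LA_mult _ _ _ HE HPi). }
  assert (HG := LA_RInt _ _ Hl0 HI).
  assert (Htau : LA lambda (tau lambda gamma beta h)).
  { exact (LA_mult _ _ _ (LA_const lambda (D_h lambda gamma beta h)) (LA_plus _ _ _ (LA_const lambda (1 / gamma)) HG)). }
  set (g := fun y => integrand beta h (clamp lambda y)).
  assert (Hgc : forall x, continuous g x) by (apply LA_cont_ext; auto).
  assert (Hgex : forall a b, ex_RInt g a b).
  { intros a b. apply (@ex_RInt_continuous R_CompleteNormedModule). intros z _. apply Hgc. }
  assert (Hgpos : forall y, 0 <= g y).
  { intro y. unfold g, integrand. pose proof (clamp_in lambda y Hl0) as Hc.
    specialize (Hpsi1 _ Hc). apply Rmult_le_pos. left; apply exp_pos.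
    left; apply Rinv_0_lt_compat; lra. }
  assert (HIpos : forall eta, 0 <= eta <= lambda -> 0 <= RInt (integrand beta h) 0 eta).
  { intros eta He. rewrite (RInt_clamp lambda (integrand beta h) eta He). fold g.
    apply RInt_ge_0. lra. apply Hgex. intros; apply Hgpos. }
  assert (HImon : forall eta, 0 <= eta <= lambda -> RInt (integrand beta h) 0 eta <= RInt (integrand beta h) 0 lambda).
  { intros eta He. rewrite (RInt_clamp lambda (integrand beta h) eta He).
    rewrite (RInt_clamp lambda (integrand beta h) lambda ltac:(lra)). fold g.
    rewrite <- (RInt_Chasles g 0 eta lambda (Hgex _ _) (Hgex _ _)). unfold plus; simpl.
    assert (0 <= RInt g eta lambda).
    { apply RInt_ge_0. lra. apply Hgex. intros; apply Hgpos. }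
    lra. }
  assert (Hbd : forall x, 0 <= x <= lambda -> 0 <= tau lambda gamma beta h x <= 1).
  { intros x Hx. pose proof (HIpos lambda ltac:(lra)).
    specialize (HIpos x Hx). specialize (HImon x Hx).
    unfold tau, D_h.
    set (A := RInt (integrand beta h) 0 lambda) in *.
    set (B := RInt (integrand beta h) 0 x) in *.
    assert (0 <= gamma * A) by (apply Rmult_le_pos; lra).
    assert (0 <= gamma * B) by (apply Rmult_le_pos; lra).
    assert (gamma * B <= gamma * A) by (apply Rmult_le_compat_l; lra).
    assert (0 < 1 + gamma * A) by lra.
    replace (gamma / (1 + gamma * A) * (1 / gamma + B)) with ((1 + gamma * B) / (1 + gamma * A)) by (field; lra).
    split.
    - apply Rmult_le_pos. lra. left; apply Rinv_0_lt_compat; lra.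
    - apply Rmult_le_reg_r with (1 + gamma * A); auto. unfold Rdiv. rewrite Rmult_assoc, Rinv_l by lra. lra. }
  split; [split|exact Hbd].
  - apply analytic_of_LA; auto.
  - exists 1. intros x Hx. specialize (Hbd x Hx). rewrite Rabs_pos_eq; lra.
Qed.
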